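(* Let $A$ and $B$ be nonzero integers, let $g=\gcd(A,B)$, and write $A=ga$, $B=gb$ (so $\gcd(a,b)=1$). For an integer $L\ge 2$, let $\ell=\prod_{p\nmid g}p^{\nu_p(L)}$ and $\gamma(L)=\max_{p\mid g}\left\lceil \nu_p(L)/\nu_p(g)\right\rceil$ (with $\gamma(L)=0$ if $g=1$). Then the following are equivalent: (1) $L\in G_{(A,B)}$; (2) there exists a positive integer $\kappa\ge \gamma(L)$ with $\ell\mid(a^{\kappa}+b^{\kappa})$; (3) $\ell\in G_{(a,b)}$.
   Context: For nonzero integers $x,y$, $G_{(x,y)}$ denotes the set of positive integers $n$ for which there exists a positive integer $k$ with $n\mid(x^k+y^k)$ (''good integers'' with respect to $x$ and $y$). For a prime $p$ and a nonzero integer $n$, $\nu_p(n)$ is the $p$-adic valuation (exponent of $p$ in $n$). Products and maxima indexed by $p$ range over primes. $\lceil x\rceil$ is the least integer $\ge x$. *)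

(* Defs.v *)
From HB Require Import structures.
From mathcomp Require Import all_boot all_order all_algebra.
Set Implicit Arguments. Unset Strict Implicit. Unset Printing Implicit Defensive.
Import Order.TTheory GRing.Theory Num.Theory.
Local Open Scope ring_scope.

Definition good (x y : int) (n : nat) : Prop :=
  (0 < n)%N /\ exists2 k : nat, (0 < k)%N & (n%:Z %| x ^+ k + y ^+ k)%Z.

Definition ceil_div (m d : nat) : nat := ((m + d.-1) %/ d)%N.

(* ell = prod_{p prime, p \nmid g} p^{nu_p(L)}  (primes with nu_p(L)>0 are <= L) *)
Definition ell_part (g L : nat) : nat :=
  (\prod_(p < L.+1 | prime p && ~~ (p %| g)) p ^ logn p L)%N.

(* gamma(L) = max_{p | g} ceil(nu_p(L)/nu_p(g)), 0 if g = 1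
   (primes dividing g are <= g). *)
Definition gamma_part (g L : nat) : nat :=
  (\max_(p < g.+1 | prime p && (p %| g)) ceil_div (logn p L) (logn p g))%N.

(* Main.v *)
Require Import Defs.
From HB Require Import structures.
From mathcomp Require Import all_boot all_order all_algebra.
From mathcomp Require Import zify ring.
Import Order.TTheory GRing.Theory Num.Theory.
Local Open Scope ring_scope.

Lemma dvd_odd (u v : int) (j : nat) :
  (u + v %| u ^+ (2 * j + 1) + v ^+ (2 * j + 1))%Z.
Proof.
elim: j => [|j IH]; first by rewrite expr1 expr1.
have -> : (2 * j.+1 + 1 = (2 * j + 1) + 2)%N by lia.
rewrite (exprD u (2 * j + 1) 2) (exprD v (2 * j + 1) 2).
set x := u ^+ (2 * j + 1) in IH *; set y := v ^+ (2 * j + 1) in IH *.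
have -> : x * u ^+ 2 + y * v ^+ 2 = u ^+ 2 * (x + y) + y * (v - u) * (u + v)
  by ring.
apply: rpredD; first exact: dvdz_mull.
exact: dvdz_mull (dvdzz _).
Qed.

Lemma PoszX (g k : nat) : (g ^ k)%N%:Z = g%:Z ^+ k.
Proof. by rewrite -!natz natrX. Qed.

Lemma ceil_le (x d K : nat) : (0 < d)%N -> (ceil_div x d <= K)%N -> (x <= K * d)%N.
Proof.
move=> d0; rewrite /ceil_div => h.
have : ((x + d.-1) %/ d < K.+1)%N by [].
rewrite ltn_divLR // => h2; lia.
Qed.

Theorem theorem3p4 (A B : int) (L : nat) (hA : A != 0) (hB : B != 0)
    (hL : (2 <= L)%N) :
  let g : nat := gcdn `|A|%N `|B|%N in
  let a : int := (A %/ g%:Z)%Z in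
  let b : int := (B %/ g%:Z)%Z in
  let l : nat := ell_part g L in
  (good A B L <->
     exists2 kappa : nat, (0 < kappa)%N /\ (gamma_part g L <= kappa)%N &
       ((l%:Z %| a ^+ kappa + b ^+ kappa)%Z)) /\
  ((exists2 kappa : nat, (0 < kappa)%N /\ (gamma_part g L <= kappa)%N &
       ((l%:Z %| a ^+ kappa + b ^+ kappa)%Z)) <-> good a b l).
Proof.
move=> g a b l.
have g0 : (0 < g)%N by rewrite gcdn_gt0 absz_gt0 hA.
have Aeq : A = a * g%:Z by rewrite divzK // dvdzE /= dvdn_gcdl.
have Beq : B = b * g%:Z by rewrite divzK // dvdzE /= dvdn_gcdr.
have L0 : (0 < L)%N by lia.
pose pi : nat_pred := [pred p | ~~ (p %| g)%N].
have leq_l : l = (L`_pi)%N.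
  rewrite /l /ell_part /partn big_mkord [LHS]big_mkcond [RHS]big_mkcond.
  apply: eq_bigr => p _ /=.
  case pr: (prime p) => //=.
  by rewrite lognE pr /= expn0; case: ifP.
have l0 : (0 < l)%N by rewrite leq_l part_gt0.
have cop k : coprime l (g ^ k).
  rewrite leq_l; apply: (@pnat_coprime pi); first exact: part_pnat.
  apply/pnatP; first by rewrite expn_gt0 g0.
  move=> p pr; rewrite Euclid_dvdX // => /andP[pg _].
  by rewrite !inE /= negbK.
have lift k : (0 < k)%N -> (l%:Z %| a ^+ k + b ^+ k)%Z ->
   exists2 kappa : nat, (0 < kappa)%N /\ (gamma_part g L <= kappa)%N &
       ((l%:Z %| a ^+ kappa + b ^+ kappa)%Z).
  move=> k0 hk; exists (k * (2 * gamma_part g L + 1))%N.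
    split; first by rewrite muln_gt0 k0 addn1.
    nia.
  rewrite !exprM. exact: (dvdz_trans hk (dvd_odd _ _ _)).
have pow k : A ^+ k + B ^+ k = (g ^ k)%N%:Z * (a ^+ k + b ^+ k).
  rewrite Aeq Beq PoszX !exprMn; ring.
split; split.
- case=> _ [k k0 hk]; apply: (lift k k0).
  move: hk; rewrite pow => hk.
  rewrite -(@Gauss_dvdzr _ (g ^ k)%N%:Z); last by rewrite coprimezE /= cop.
  apply: dvdz_trans hk; rewrite dvdzE /= leq_l; exact: dvdn_part.
- case=> k [k0 kg] hk; split => //; exists k => //.
  rewrite pow -(partnC pi L0) -leq_l PoszM mulrC.
  apply: dvdz_mul => //; rewrite dvdzE /=.
  have m0 : (0 < (L`_pi^')%N)%N by rewrite part_gt0.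
  apply/(dvdn_partP _ m0) => p pin.
  have pr : prime p by move: pin; rewrite mem_primes => /andP[].
  have pg : (p %| g)%N.
    have := pnatPpi (part_pnat pi^' L) pin.
    by rewrite !inE /= negbK.
  rewrite p_part pfactor_dvdn ?expn_gt0 ?g0 // lognX.
  apply: (leq_trans (dvdn_leq_log p L0 (dvdn_part _ _))).
  have lg0 : (0 < logn p g)%N by rewrite logn_gt0 mem_primes pr g0 pg.
  apply: ceil_le => //; apply: leq_trans kg.
  have ple : (p < g.+1)%N by rewrite ltnS dvdn_leq.
  have := @leq_bigmax_cond _ (fun i : 'I_g.+1 => prime i && (i %| g)%N)
    (fun i : 'I_g.+1 => ceil_div (logn i L) (logn i g)) (Ordinal ple).
  by rewrite /= pr pg => /(_ isT).
- case=> k [k0 _] hk; split => //; by exists k.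
- case=> _ [k k0 hk]; exact: lift k k0 hk.
Qed.
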